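(* Let $X=(X_n:n\ge 0)$ be an irreducible positive recurrent Markov chain on a countable state space $S$ with one-step transition matrix $P=(P(x,y):x,y\in S)$ and (unique) stationary distribution $\pi$. Fix $z\in S$, and let $(A_n:n\ge 1)$ be a sequence of finite subsets of $S$ with $z\in A_1$, $A_n\subseteq A_{n+1}$ for all $n$, and $\bigcup_n A_n=S$. Let $\tilde\pi_n$ be the truncation approximation associated with the truncation set $A_n$ (as defined in the context). Then for each $x\in S$, $\tilde\pi_n(x)\to\pi(x)$ as $n\to\infty$.
   Context: Truncation approximation: for a finite set $A\subseteq S$ with $z\in A$, put $A'=A\setminus\{z\}$ and define the row vector $\tilde\nu=(\tilde\nu(x):x\in A')$ with $\tilde\nu(x)=P(z,x)$, the column vector $\tilde e=(\tilde e(x):x\in A')$ with $\tilde e(x)=1$, and the matrix $\tilde B=(\tilde B(x,y):x,y\in A')$ with $\tilde B(x,y)=P(x,y)$. (By irreducibility, $I-\tilde B$ is nonsingular.) The truncation approximation $\tilde\pi$ is the probability vector on $S$ given by $\tilde\pi(x)=\dfrac{(\tilde\nu(I-\tilde B)^{-1})(x)}{1+\tilde\nu(I-\tilde B)^{-1}\tilde e}$ for $x\in A'$, $\tilde\pi(z)=\left(1+\tilde\nu(I-\tilde B)^{-1}\tilde e\right)^{-1}$, and $\tilde\pi(y)=0$ for $y\in S\setminus A$. Here $\tilde\pi_n$ denotes this object with $A=A_n$. *)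

(* Defs.v *)
From HB Require Import structures.
From mathcomp Require Import all_boot all_order all_algebra.
From mathcomp Require Import finmap.
From mathcomp Require Import all_classical all_reals all_analysis.
Set Implicit Arguments. Unset Strict Implicit. Unset Printing Implicit Defensive.
Import Order.TTheory GRing.Theory Num.Theory.
Import numFieldNormedType.Exports.
Local Open Scope classical_set_scope.
Local Open Scope ring_scope.
Local Open Scope fset_scope.

Section MC.
Variables (R : realType) (S : countType).
Implicit Types (P : S -> S -> R).

Definition stochastic P :=
  (forall x y, 0 <= P x y) /\
  (forall x, (\esum_(y in [set: S]) (P x y)%:E = 1)%E).

(* irreducible: every y is reachable from every x along a path of
   positive-probability transitions (i.e. P^n(x,y) > 0 for some n). *)
Definition irreducible P :=
  forall x y, exists s : seq S,
    path (fun a b => 0 < P a b) x s && (last x s == y).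

(* first_passage P n x y = P_x(first visit to y at a time >= 1 happens at time n+1) *)
Fixpoint first_passage P (n : nat) (x y : S) : \bar R :=
  match n with
  | 0 => (P x y)%:E
  | m.+1 => (\esum_(w in [set w | w <> y]) ((P x w)%:E * first_passage P m w y))%E
  end.

(* x is positive recurrent: return to x is certain, with finite mean return time *)
Definition positive_recurrent_state P (x : S) :=
  (\esum_(n in [set: nat]) first_passage P n x x = 1)%E /\
  (\esum_(n in [set: nat]) ((n.+1)%:R%:E * first_passage P n x x) < +oo)%E.

Definition positive_recurrent P := forall x, positive_recurrent_state P x.

Definition stationary_distribution P (pi : S -> R) :=
  (forall x, 0 <= pi x) /\
  (\esum_(x in [set: S]) (pi x)%:E = 1)%E /\
  (forall y, (\esum_(x in [set: S]) ((pi x)%:E * (P x y)%:E) = (pi y)%:E)%E).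

Section Trunc.
Variables (P : S -> S -> R) (z : S) (A : {fset S}).
Let s : seq S := enum_fset (A `\ z).
Let k : nat := size s.
Definition trunc_B : 'M[R]_k := \matrix_(i < k, j < k) P (nth z s i) (nth z s j).
Definition trunc_nu : 'rV[R]_k := \row_(j < k) P z (nth z s j).
Definition trunc_v : 'rV[R]_k := trunc_nu *m invmx (1%:M - trunc_B).
Definition trunc_den : R := 1 + \sum_(j < k) trunc_v 0 j.
Definition trunc_pi (x : S) : R :=
  if x == z then trunc_den^-1
  else (\sum_(j < k) (if nth z s j == x then trunc_v 0 j else 0)) / trunc_den.
End Trunc.
End MC.

(* Main.v *)
Require Import Defs.
From HB Require Import structures.
From mathcomp Require Import all_boot all_order all_algebra.
From mathcomp Require Import finmap.
From mathcomp Require Import all_classical all_reals all_analysis.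
From mathcomp Require Import ring lra.
Import Order.TTheory GRing.Theory Num.Theory.
Import numFieldNormedType.Exports.
Local Open Scope classical_set_scope.
Local Open Scope ring_scope.


Section Aux.
Variables (R : realType) (S : countType).

Lemma E1 (f : S -> R) (s : seq S) : (forall x, 0 <= f x) -> uniq s ->
  ((\sum_(x <- s) f x)%:E <= \esum_(x in [set: S]) (f x)%:E)%E.
Proof.
move=> f0 us; apply: esum_ge; exists [set` s]; first by split=> //; exact: finite_seq.
by rewrite -fsbig_seq // sumEFin.
Qed.

Lemma E2 (f : S -> R) a eps : (forall x, 0 <= f x) ->
  \esum_(x in [set: S]) (f x)%:E = a%:E -> 0 < eps ->
  exists s : seq S, uniq s /\ a - eps < \sum_(x <- s) f x.
Proof.
move=> f0 ea e0.
have : ((a - eps)%:E < \esum_(x in [set: S]) (f x)%:E)%E.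
  by rewrite ea lte_fin; lra.
case/ereal_sup_gt => _ [A [finA _] <-].
rewrite fsbig_finite // sumEFin lte_fin => H.
by exists (fset_set A); split => //; exact: fset_uniq.
Qed.

Lemma sum_sub (f : S -> R) (s1 s2 : seq S) : uniq s1 -> uniq s2 ->
  {subset s1 <= s2} -> (forall x, x \in s2 -> 0 <= f x) ->
  \sum_(x <- s1) f x <= \sum_(x <- s2) f x.
Proof.
move=> u1 u2 sub f0.
rewrite [X in _ <= X](bigID (mem s1)) /=.
have -> : \sum_(x <- s2 | x \in s1) f x = \sum_(x <- s1) f x.
  rewrite -big_filter; apply: perm_big; apply: uniq_perm => //.
    exact: filter_uniq.
  move=> x; rewrite mem_filter; apply/andP/idP => [[]//| h]; split => //.
  exact: sub.
rewrite lerDl big_seq_cond; apply: sumr_ge0 => x /andP[xs _]; exact: f0.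
Qed.

Lemma term_le (f : S -> R) (s : seq S) x : uniq s -> x \in s ->
  (forall y, y \in s -> 0 <= f y) -> f x <= \sum_(y <- s) f y.
Proof.
move=> us xs f0; rewrite (bigD1_seq x) //= lerDl big_seq_cond.
by apply: sumr_ge0 => y /andP[ys _]; exact: f0.
Qed.

Lemma rowsum_le1 (P : S -> S -> R) x (s : seq S) : stochastic P -> uniq s ->
  \sum_(y <- s) P x y <= 1.
Proof.
move=> [P0 P1] us; rewrite -lee_fin -(P1 x); exact: E1.
Qed.

Lemma super_nonneg (P : S -> S -> R) z : stochastic P -> irreducible P ->
  forall (s : seq S) (w : S -> R), uniq s -> z \notin s ->
  (forall y, y \in s -> \sum_(x <- s) w x * P x y <= w y) ->
  forall y, y \in s -> 0 <= w y.
Proof.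
move=> st irr s w us zs sup y0 y0s.
have P0 := st.1.
rewrite leNgt; apply/negP => wy0.
set N := [seq x <- s | w x < 0].
have uN : uniq N by exact: filter_uniq.
have Ns : forall x, x \in N -> x \in s by move=> x; rewrite mem_filter => /andP[].
have Nw : forall x, x \in N -> w x < 0 by move=> x; rewrite mem_filter => /andP[].
pose PN x := \sum_(y <- N) P x y.
have h1 : \sum_(x <- N) w x * PN x <= \sum_(y <- N) w y.
  apply: (@le_trans _ _ (\sum_(y <- N) \sum_(x <- s) w x * P x y)); last first.
    rewrite big_seq [X in _ <= X]big_seq; apply: ler_sum => y yN.
    exact: sup (Ns _ yN).
  rewrite exchange_big /=.
  under [X in _ <= X]eq_bigr do rewrite -mulr_sumr.
  rewrite [X in _ <= X](bigID (fun x => w x < 0)) /= big_filter lerDl.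
  apply: sumr_ge0 => x; rewrite -leNgt => wx; apply: mulr_ge0 => //.
  by apply: sumr_ge0.
have h2 : 0 <= \sum_(x <- N) w x * (1 - PN x).
  under eq_bigr do rewrite mulrBr mulr1.
  by rewrite sumrB subr_ge0.
have key : forall x, x \in N -> 1 <= PN x.
  move=> x xN.
  have : 0 <= w x * (1 - PN x).
    move: h2; rewrite (bigD1_seq x) //= => h2.
    have : \sum_(i <- N | i != x) w i * (1 - PN i) <= 0.
      rewrite big_seq_cond; apply: sumr_le0 => i /andP[iN _].
      apply: mulr_le0_ge0; first exact/ltW/Nw.
      by rewrite subr_ge0; apply: rowsum_le1.
    lra.
  have := Nw _ xN; nra.
have closed : forall x y, x \in N -> y \notin N -> P x y <= 0.
  move=> x y xN yN.
  have := @rowsum_le1 P x (y :: N) st.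
  rewrite /= yN uN big_cons => /(_ erefl).
  have := key x xN; rewrite /PN; lra.
have y0N : y0 \in N by rewrite mem_filter wy0.
case: (irr y0 z) => p /andP[pp /eqP lp].
suff : last y0 p \in N by rewrite lp => /Ns; rewrite (negbTE zs).
elim: p y0 y0N pp {lp wy0 y0s} => [//|y p IH] x xN /= /andP[xy pp].
apply: IH pp; apply/negPn/negP => yN.
by have := closed x y xN yN; rewrite leNgt xy.
Qed.

End Aux.


Section Mat.
Variables (R : realType) (S : countType) (P : S -> S -> R) (z : S) (A : {fset S}).
Definition sq : seq S := enum_fset (A `\ z)%fset.
Definition rowf (w : 'rV[R]_(size sq)) (y : S) : R :=
  \sum_(j < size sq) (if nth z sq j == y then w 0 j else 0).

Lemma sq_uniq : uniq sq. Proof. exact: fset_uniq. Qed.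
Lemma mem_sq y : (y \in sq) = (y != z) && (y \in A).
Proof. by rewrite /sq -in_fsetD1. Qed.
Lemma z_notin_sq : z \notin sq. Proof. by rewrite mem_sq eqxx. Qed.

Lemma rowf_nth w (j : 'I_(size sq)) : rowf w (nth z sq j) = w 0 j.
Proof.
rewrite /rowf (bigD1 j) //= eqxx big1 ?addr0 // => i ij.
have /negbTE ij' : (i : nat) != j by [].
by rewrite nth_uniq // ?sq_uniq // ij'.
Qed.

Lemma rowf_out w y : y \notin sq -> rowf w y = 0.
Proof.
move=> ys; rewrite /rowf big1 // => i _; case: eqP => // e.
by move: ys; rewrite -e mem_nth.
Qed.

Lemma sum_sq (g : S -> R) : \sum_(x <- sq) g x = \sum_(j < size sq) g (nth z sq j).
Proof. by rewrite (big_nth z) big_mkord. Qed.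

Lemma mat_eq w (j : 'I_(size sq)) :
  (w *m (1%:M - trunc_B P z A)) 0 j =
  rowf w (nth z sq j) - \sum_(x <- sq) rowf w x * P x (nth z sq j).
Proof.
rewrite mulmxBr mulmx1 !mxE rowf_nth sum_sq; congr (_ - _).
by apply: eq_bigr => i _; rewrite rowf_nth mxE.
Qed.

Lemma trunc_unit : stochastic P -> irreducible P ->
  (1%:M - trunc_B P z A) \in unitmx.
Proof.
move=> st irr; rewrite -row_free_unit -kermx_eq0; apply/eqP/row_matrixP => i.
rewrite row0.
set w := row i _.
have hw : w *m (1%:M - trunc_B P z A) = 0.
  by apply/sub_kermxP; exact: row_sub.
have eqw : forall y, y \in sq -> \sum_(x <- sq) rowf w x * P x y = rowf w y.
  move=> y /(nthP z) [j jlt <-].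
  have := mat_eq w (Ordinal jlt); rewrite hw mxE /=; lra.
have h1 := @super_nonneg R S P z st irr sq (rowf w) sq_uniq z_notin_sq.
have h2 := @super_nonneg R S P z st irr sq (fun y => - rowf w y) sq_uniq z_notin_sq.
apply/rowP => j; rewrite [RHS]mxE -(rowf_nth w j).
apply/eqP; rewrite eq_le; apply/andP; split; last first.
  by apply: h1 => [y ys|]; rewrite ?eqw // mem_nth.

rewrite -oppr_ge0; apply: h2 => [y ys|]; last by rewrite mem_nth.
under eq_bigr do rewrite mulNr.
by rewrite sumrN eqw.
Qed.

Lemma trunc_eq : stochastic P -> irreducible P -> forall y, y \in sq ->
  rowf (trunc_v P z A) y = P z y + \sum_(x <- sq) rowf (trunc_v P z A) x * P x y.
Proof.
move=> st irr y /(nthP z) [j jlt <-].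
have := mat_eq (trunc_v P z A) (Ordinal jlt).
rewrite /trunc_v mulmxKV ?trunc_unit // mxE /=; lra.
Qed.

Lemma trunc_den_eq : trunc_den P z A = 1 + \sum_(x <- sq) rowf (trunc_v P z A) x.
Proof. by rewrite sum_sq /trunc_den; congr (_ + _); apply: eq_bigr => j _; rewrite rowf_nth. Qed.

Lemma trunc_pi_eq x : trunc_pi P z A x =
  if x == z then (trunc_den P z A)^-1 else rowf (trunc_v P z A) x / trunc_den P z A.
Proof. by []. Qed.

End Mat.


Section Main.
Variables (R : realType) (S : countType) (P : S -> S -> R) (pi : S -> R) (z : S)
  (A : nat -> {fset S}).
Hypotheses (st : stochastic P) (irr : irreducible P)
  (stat : stationary_distribution P pi).

Let s n := sq S z (A n).
Let V n y := rowf R S z (A n) (trunc_v P z (A n)) y.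
Let c := pi z.
Let D n y := pi y - c * V n y.
Let r n y := pi y - c * P z y - \sum_(x <- s n) pi x * P x y.
Let Rs n := \sum_(y <- s n) r n y.

Lemma pi0 x : 0 <= pi x. Proof. exact: stat.1. Qed.
Lemma P0 x y : 0 <= P x y. Proof. exact: st.1. Qed.

Lemma pi_sum_le (t : seq S) y : uniq t -> \sum_(x <- t) pi x * P x y <= pi y.
Proof.
move=> ut; rewrite -lee_fin -(stat.2.2 y).
have -> : (\esum_(x in [set: S]) ((pi x)%:E * (P x y)%:E) =
           \esum_(x in [set: S]) (pi x * P x y)%:E)%E.
  by apply: eq_esum => x _; rewrite EFinM.
by apply: E1 => // x; apply: mulr_ge0; [exact: pi0|exact: P0].
Qed.

Lemma pi_le1 (t : seq S) : uniq t -> \sum_(x <- t) pi x <= 1.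
Proof. by move=> ut; rewrite -lee_fin -stat.2.1; apply: E1 => // x; exact: pi0. Qed.

Fixpoint pprod (x : S) (p : seq S) : R :=
  if p is y :: p' then P x y * pprod y p' else 1.

Lemma pprod_pos x p : path (fun a b => 0 < P a b) x p -> 0 < pprod x p.
Proof. by elim: p x => [|y p IH] x //= /andP[h /IH]; apply: mulr_gt0. Qed.

Lemma P_le1 x y : P x y <= 1.
Proof. by have := @rowsum_le1 R S P x [:: y] st erefl; rewrite big_seq1. Qed.

Lemma pprod_le1 x p : pprod x p <= 1.
Proof.
elim: p x => [|y p IH] x //=; rewrite -[1]mulr1; apply: ler_pM => //.
- exact: P0.
- elim: p {IH} y => [|u p IH] y //=; apply: mulr_ge0 => //; exact: P0.
- exact: P_le1.
Qed.

Lemma pi_path x p : pi x * pprod x p <= pi (last x p).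
Proof.
elim: p x => [|y p IH] x /=; first by rewrite mulr1.
apply: le_trans (IH y); rewrite mulrA; apply: ler_wpM2r.
  elim: p {IH} y => [|u p IH] y //=; apply: mulr_ge0 => //; exact: P0.
by have := @pi_sum_le [:: x] y erefl; rewrite big_seq1.
Qed.

Lemma c_pos : 0 < c.
Proof.
have [x px] : exists x, 0 < pi x.
  case: (pselect (exists x, 0 < pi x)) => // h.
  have : (\esum_(x in [set: S]) (pi x)%:E = 0)%E.
    apply: esum1 => x _; congr (_%:E); apply/eqP; rewrite eq_le pi0 andbT.
    by rewrite leNgt; apply/negP => hx; apply: h; exists x.
  by rewrite stat.2.1 => -[] /eqP; rewrite oner_eq0.
case: (irr x z) => p /andP[pp /eqP lp].
have := pi_path x p; rewrite lp /c => h.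
apply: lt_le_trans h; apply: mulr_gt0 => //; exact: pprod_pos.
Qed.

Lemma s_uniq n : uniq (s n). Proof. exact: sq_uniq. Qed.
Lemma z_notin n : z \notin s n. Proof. exact: z_notin_sq. Qed.
Lemma zs_uniq n : uniq (z :: s n). Proof. by rewrite /= z_notin s_uniq. Qed.

Lemma V_eq n y : y \in s n -> V n y = P z y + \sum_(x <- s n) V n x * P x y.
Proof. exact: trunc_eq. Qed.

Lemma V_ge0 n y : 0 <= V n y.
Proof.
case: (boolP (y \in s n)) => ys; last by rewrite /V rowf_out.
apply: (@super_nonneg R S P z st irr (s n) (V n) (s_uniq n) (z_notin n)) => //.
by move=> u us; rewrite (V_eq _ _ us) lerDr; exact: P0.
Qed.

Lemma r_ge0 n y : 0 <= r n y.
Proof.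
have := @pi_sum_le (z :: s n) y (zs_uniq n); rewrite big_cons /r /c; lra.
Qed.

Lemma D_eq n y : y \in s n -> D n y = \sum_(x <- s n) D n x * P x y + r n y.
Proof.
move=> ys; rewrite /D /r (V_eq _ _ ys).
have -> : \sum_(x <- s n) (pi x - c * V n x) * P x y =
          \sum_(x <- s n) pi x * P x y - c * \sum_(x <- s n) V n x * P x y.
  rewrite mulr_sumr -sumrB; apply: eq_bigr => x _; ring.
ring.
Qed.

Lemma D_ge0 n y : 0 <= D n y.
Proof.
case: (boolP (y \in s n)) => ys; last by rewrite /D /V rowf_out // mulr0 subr0 pi0.
apply: (@super_nonneg R S P z st irr (s n) (D n) (s_uniq n) (z_notin n)) => //.
by move=> u us; rewrite [X in _ <= X](D_eq _ _ us) lerDl; exact: r_ge0.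
Qed.

Lemma D_le_pi n y : D n y <= pi y.
Proof. rewrite /D lerBlDr lerDl; apply: mulr_ge0; [exact/ltW/c_pos|exact: V_ge0]. Qed.

Lemma D_step n x y : x \in s n -> y \in s n -> D n x * P x y <= D n y.
Proof.
move=> xs ys; rewrite [X in _ <= X](D_eq _ _ ys).
have h2 := r_ge0 n y.
have h1 : D n x * P x y <= \sum_(u <- s n) D n u * P u y.
  apply: (@term_le R S (fun u => D n u * P u y)) => //; first exact: s_uniq.
  by move=> u _; apply: mulr_ge0; [exact: D_ge0|exact: P0].
lra.
Qed.

Lemma outflow n x w : x \in s n -> w \notin s n -> D n x * P x w <= Rs n.
Proof.
move=> xs ws.
pose PS u := \sum_(y <- s n) P u y.
have e : Rs n = \sum_(u <- s n) D n u * (1 - PS u).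
  have : \sum_(y <- s n) D n y = \sum_(u <- s n) D n u * PS u + Rs n.
    rewrite (eq_big_seq (fun y => \sum_(u <- s n) D n u * P u y + r n y)); last first.
      by move=> y ys; exact: (D_eq _ _ ys).
    rewrite big_split /= exchange_big /=; congr (_ + _).
    by apply: eq_bigr => u _; rewrite mulr_sumr.
  move=> h; rewrite (eq_bigr (fun u => D n u - D n u * PS u)); last first.
    by move=> u _; rewrite mulrBr mulr1.
  rewrite sumrB; lra.
have PSle u : PS u <= 1 by apply: rowsum_le1 => //; exact: s_uniq.
apply: (@le_trans _ _ (D n x * (1 - PS x))).
  apply: ler_wpM2l; first exact: D_ge0.
  have := @rowsum_le1 R S P x (w :: s n) st; rewrite /= ws s_uniq big_cons.
  by move=> /(_ erefl); rewrite /PS; lra.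
rewrite e; apply: (@term_le R S (fun u => D n u * (1 - PS u))) => //.
  exact: s_uniq.
by move=> u _; apply: mulr_ge0; [exact: D_ge0|rewrite subr_ge0].
Qed.

Lemma D_path n x p : x \in s n -> path (fun a b => 0 < P a b) x p -> last x p = z ->
  D n x * pprod x p <= Rs n.
Proof.
elim: p x => [|y p IH] x xs /=.
  by move=> _ e; move: xs; rewrite e (negbTE (z_notin n)).
move=> /andP[xy pp] lp.
have pp0 : 0 <= pprod y p by apply/ltW/pprod_pos.
case: (boolP (y \in s n)) => ys.
  apply: le_trans (IH y ys pp lp); rewrite mulrA; apply: ler_wpM2r => //.
  exact: D_step.
apply: le_trans (outflow _ _ _ xs ys); rewrite mulrA -[X in _ <= X]mulr1.
apply: ler_wpM2l; last exact: pprod_le1.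
by apply: mulr_ge0; [exact: D_ge0|exact: P0].
Qed.


Hypotheses (mono : forall n, (1 <= n)%N -> fsubset (A n) (A n.+1))
  (cover : forall x, exists2 n, (1 <= n)%N & x \in A n).

Lemma A_mono x m n : (1 <= m)%N -> (m <= n)%N -> x \in A m -> x \in A n.
Proof.
move=> m1; elim: n => [|n IH] mn xm; first by move: mn; rewrite leqn0 => /eqP mz; move: m1; rewrite mz.
move: mn xm; rewrite leq_eqVlt => /orP[/eqP <- // | mn] xm.
rewrite ltnS in mn.
have n1 : (1 <= n)%N by apply: leq_trans m1 _.
have := fsubsetP (mono _ n1); apply; exact: IH.
Qed.

Lemma evX (X : seq S) : exists N, forall n, (N <= n)%N -> forall x, x \in X -> x \in A n.
Proof.
elim: X => [|x X [N HN]]; first by exists 0%N.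
case: (cover x) => nx nx1 xnx.
exists (maxn nx N) => n; rewrite geq_max => /andP[h1 h2] y.
rewrite in_cons => /orP[/eqP ->|yX]; last exact: HN.
exact: A_mono nx1 h1 xnx.
Qed.

Lemma in_zs n x : x \in A n -> x \in z :: s n.
Proof. by move=> xA; rewrite in_cons /s mem_sq xA andbT; case: eqP. Qed.

Lemma tail eps : 0 < eps -> exists X, uniq X /\ 1 - eps < \sum_(x <- X) pi x.
Proof. by move=> e0; apply: (@E2 R S pi 1 eps pi0 stat.2.1 e0). Qed.

Lemma tail_disj X Y : uniq X -> uniq Y -> (forall y, y \in Y -> y \notin X) ->
  \sum_(y <- Y) pi y <= 1 - \sum_(x <- X) pi x.
Proof.
move=> uX uY d.
have : uniq (X ++ Y).
  rewrite cat_uniq uX uY andbT /=; apply/hasPn => y /d //.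
by move/pi_le1; rewrite big_cat /=; lra.
Qed.

Lemma Rs_small eps : 0 < eps -> exists N, forall n, (N <= n)%N -> Rs n <= 2 * eps.
Proof.
move=> e0; case: (tail _ e0) => X [uX hX]; case: (evX X) => N HN.
exists N => n hn.
pose PS u := \sum_(y <- s n) P u y.
pose g u := pi u * PS u.
have PSle u : PS u <= 1 by apply: rowsum_le1 => //; exact: s_uniq.
have PS0 u : 0 <= PS u by apply: sumr_ge0 => y _; exact: P0.
have g0 u : 0 <= g u by apply: mulr_ge0 => //; exact: pi0.
have gle u : g u <= pi u by rewrite /g -[X in _ <= X]mulr1; apply: ler_wpM2l => //; exact: pi0.
have eq1 : (\esum_(u in [set: S]) (g u)%:E)%E = (\sum_(y <- s n) pi y)%:E.
  rewrite -sumEFin.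
  under [RHS]eq_bigr => y _ do rewrite -(stat.2.2 y).
  rewrite -esum_sum; last first.
    by move=> i j _ _; rewrite -EFinM lee_fin; apply: mulr_ge0; [exact: pi0|exact: P0].
  apply: eq_esum => u _; rewrite /g /PS mulr_sumr -sumEFin.
  by apply: eq_bigr => y _; rewrite EFinM.
case: (@E2 R S g _ eps g0 eq1 e0) => Y [uY hY].
pose Yf := [seq y <- Y | y \notin z :: s n].
have split : \sum_(y <- Y) g y <= \sum_(y <- z :: s n) g y + \sum_(y <- Yf) g y.
  rewrite (bigID (mem (z :: s n))) /= big_filter lerD2r -big_filter.
  apply: sum_sub.
  - exact: filter_uniq.
  - exact: zs_uniq.
  - by move=> y; rewrite mem_filter => /andP[].
  - by move=> y _; exact: g0.
have hYf : \sum_(y <- Yf) g y <= 1 - \sum_(x <- X) pi x.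
  apply: le_trans (tail_disj _ _ uX (filter_uniq _ uY) _).
    by apply: ler_sum => y _; exact: gle.
  move=> y; rewrite mem_filter => /andP[yn _]; apply/negP => yX.
  by move: yn; rewrite in_zs // (HN n hn y yX).
have eRs : Rs n = \sum_(y <- s n) pi y - g z - \sum_(x <- s n) g x.
  rewrite /Rs /r !sumrB -mulr_sumr exchange_big /= /g /PS /c.
  congr (_ - _ - _); apply: eq_bigr => x _; by rewrite mulr_sumr.
move: split; rewrite big_cons; lra.
Qed.

Lemma D_pt x eps : x != z -> 0 < eps -> exists N, forall n, (N <= n)%N -> D n x <= eps.
Proof.
move=> xz e0; case: (irr x z) => p /andP[pp /eqP lp].
have pp0 := pprod_pos _ _ pp.
have e1 : 0 < eps * pprod x p / 2 by apply: divr_gt0 => //; apply: mulr_gt0.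
case: (Rs_small _ e1) => N1 H1; case: (evX [:: x]) => N2 H2.
exists (maxn N1 N2) => n; rewrite geq_max => /andP[h1 h2].
have xs : x \in s n by rewrite /s mem_sq xz (H2 n h2 x (mem_head _ _)).
have := D_path _ _ _ xs pp lp; have := H1 n h1 => ha hb.
rewrite -(ler_pM2r pp0); lra.
Qed.

Lemma D_fin (t : seq S) : (forall y, y \in t -> y != z) -> forall eps, 0 < eps ->
  exists N, forall n, (N <= n)%N -> \sum_(y <- t) D n y <= eps.
Proof.
elim: t => [|y t IH] ht eps e0.
  by exists 0%N => n _; rewrite big_nil ltW.
have e2 : 0 < eps / 2 by apply: divr_gt0.
case: (D_pt _ _ (ht y (mem_head _ _)) e2) => N1 H1.
have ht' : forall u, u \in t -> u != z.
  by move=> u ut; apply: ht; rewrite in_cons ut orbT.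
case: (IH ht' _ e2) => N2 H2.
exists (maxn N1 N2) => n; rewrite geq_max => /andP[h1 h2].
rewrite big_cons; have := H1 n h1; have := H2 n h2; lra.
Qed.

Lemma SD_small eps : 0 < eps -> exists N, forall n, (N <= n)%N ->
  \sum_(y <- s n) D n y <= 2 * eps.
Proof.
move=> e0; case: (tail _ e0) => X [uX hX].
pose X' := [seq y <- X | y != z].
case: (@D_fin X' _ eps e0) => [y|N HN]; first by rewrite mem_filter => /andP[].
exists N => n hn.
rewrite (bigID (mem X)) /=.
have h1 : \sum_(y <- s n | y \in X) D n y <= \sum_(y <- X') D n y.
  rewrite -big_filter; apply: sum_sub.
  - exact/filter_uniq/s_uniq.
  - exact: filter_uniq.
  - move=> y; rewrite !mem_filter => /andP[yX ys]; rewrite yX andbT.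
    by apply: contraNneq (z_notin n) => <-.
  - by move=> y _; exact: D_ge0.
have h2 : \sum_(y <- s n | y \notin X) D n y <= 1 - \sum_(x <- X) pi x.
  rewrite -big_filter; apply: le_trans (tail_disj _ _ uX (filter_uniq _ (s_uniq n)) _).
    by apply: ler_sum => y _; exact: D_le_pi.
  by move=> y; rewrite mem_filter => /andP[].
have := HN n hn; lra.
Qed.


Let a n := c * trunc_den P z (A n).

Lemma a_eq n : a n = c + \sum_(y <- s n) pi y - \sum_(y <- s n) D n y.
Proof.
rewrite /a (trunc_den_eq R S P z (A n)) mulrDr mulr1 mulr_sumr.
rewrite (eq_bigr (fun y => pi y - D n y)); last by move=> y _; rewrite /D /V; ring.
rewrite sumrB /s; ring.
Qed.

Lemma a_cvg : (fun n => a n) @ \oo --> (1 : R).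
Proof.
apply/cvgrPdist_le => eps e0.
have e4 : 0 < eps / 4 by apply: divr_gt0.
have e2 : 0 < eps / 2 by apply: divr_gt0.
case: (SD_small _ e4) => N1 H1.
case: (tail _ e2) => X [uX hX].
case: (evX X) => N2 H2.
exists (maxn N1 N2) => // n /=; rewrite geq_max => /andP[h1 h2].
have u1 : pi z + \sum_(y <- s n) pi y <= 1.
  by have := pi_le1 _ (zs_uniq n); rewrite big_cons.
have u2 : \sum_(y <- X) pi y <= pi z + \sum_(y <- s n) pi y.
  have -> : pi z + \sum_(y <- s n) pi y = \sum_(y <- z :: s n) pi y by rewrite big_cons.
  apply: sum_sub => //; first exact: zs_uniq.
    by move=> y yX; apply: in_zs; exact: H2.
  by move=> y _; exact: pi0.
have u3 : 0 <= \sum_(y <- s n) D n y by apply: sumr_ge0 => y _; exact: D_ge0.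
have u4 := H1 n h1.
rewrite a_eq /c ger0_norm; lra.
Qed.

Lemma main x : (fun n => trunc_pi P z (A n) x) @ \oo --> pi x.
Proof.
have c0 : c != 0 by rewrite (gt_eqF c_pos).
have ha : (fun n => (a n)^-1) @ \oo --> (1^-1 : R).
  by apply: cvgV; [exact: oner_neq0 | exact: a_cvg].
case: (eqVneq x z) => [->|xz].
  have -> : (fun n => trunc_pi P z (A n) z) = (fun n => c * (a n)^-1).
    by apply/funext => n; rewrite trunc_pi_eq eqxx /a invfM mulrA mulfV // mul1r.
  suff h : (fun n => c * (a n)^-1) @ \oo --> (c * 1^-1 : R) by rewrite invr1 mulr1 in h.
  exact: cvgM (cvg_cst _) ha.
have -> : (fun n => trunc_pi P z (A n) x) = (fun n => (pi x - D n x) * (a n)^-1).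
  apply/funext => n; rewrite trunc_pi_eq (negbTE xz) /a /D /V invfM.
  have -> : forall u, pi x - (pi x - c * u) = c * u by move=> u; ring.
  by rewrite mulrACA mulfV // mul1r.
have hb : (fun n => pi x - D n x) @ \oo --> pi x.
  apply/cvgrPdist_le => eps e0; case: (D_pt _ _ xz e0) => N HN.
  exists N => // n /= hn.
  have -> : pi x - (pi x - D n x) = D n x by ring.
  by rewrite ger0_norm ?D_ge0 //; exact: HN.
suff h : (fun n => (pi x - D n x) * (a n)^-1) @ \oo --> (pi x * 1^-1 : R).
  by rewrite invr1 mulr1 in h.
exact: cvgM hb ha.
Qed.

End Main.


Theorem proposition1 (R : realType) (S : countType) (P : S -> S -> R)
    (pi : S -> R) (z : S) (A : nat -> {fset S}) :
  stochastic P -> irreducible P -> positive_recurrent P ->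
  stationary_distribution P pi ->
  z \in A 1%N ->
  (forall n, (1 <= n)%N -> fsubset (A n) (A n.+1)) ->
  (forall x, exists2 n, (1 <= n)%N & x \in A n) ->
  forall x : S, (fun n => trunc_pi P z (A n) x) @ \oo --> pi x.
Proof.
move=> st irr _ stat _ mono cover x.
exact: (@main R S P pi z A st irr stat mono cover x).
Qed.
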